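(* Let $V=(J,(V_j)_{j\in J},d,H)$ be a hypergraph system, and let $(\nu_e)_{e\in H}$ be a pseudorandom system of measures on $V$. Suppose that for every $e'\subseteq J$ with $|e'|<d$ we are given a $\sigma$-algebra $\mathcal{B}_{e'}\subseteq\mathcal{A}_{e'}$ with $|\mathcal{B}_{e'}|\le M$. Let $e\in H$ and let $E'_e$ be a set in $\bigvee_{e'\subsetneq e}\mathcal{B}_{e'}$. Then for every $f:V_e\to\mathbb{R}$, $$\mathbb{E}\big(1_{E'_e}(x)f(\pi_e(x))\mid x\in V_J\big)=O_M\big(\|f\|_{\Box^e}\big).$$
   Context: A hypergraph system is a quadruple $V=(J,(V_j)_{j\in J},d,H)$ where $J$ is a finite set, each $V_j$ is a finite nonempty set, $d\ge1$ is an integer and $H\subseteq\binom{J}{d}:=\{e\subseteq J:|e|=d\}$. For $e\subseteq J$ put $V_e:=\prod_{j\in e}V_j$, let $\pi_e:V_J\to V_e$ be the coordinate projection and $\mathcal{A}_e:=\{\pi_e^{-1}(E):E\subseteq V_e\}$. $\bigvee$ denotes the smallest $\sigma$-algebra containing the given ones; $|\mathcal{B}|$ is the number of sets in the finite $\sigma$-algebra $\mathcal{B}$. For a finite nonempty set $Z$ and $f:Z\to\mathbb{R}$, $\mathbb{E}(f(x)\mid x\in Z):=|Z|^{-1}\sum_{x\in Z}f(x)$; constraints written after the bar mean uniform averaging over all tuples satisfying them. All objects depend on a parameter $N$ ranging over a sequence tending to infinity while $J,d,H$ are fixed; implicit constants may depend on $J$. $O_y(X)$ denotes a quantity bounded in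 magnitude by $C(y)X$; $o_{N\to\infty}(1)$ a quantity tending to $0$ as $N\to\infty$. Cube notation: for a finite set $e$, $\{0,1\}^e$ is the set of tuples $\omega=(\omega_j)_{j\in e}$ with $\omega_j\in\{0,1\}$, and $0^e$ is the all-zero tuple; for $x^{(0)}_J,x^{(1)}_J\in V_J$, $e\subseteq J$ and $\omega\in\{0,1\}^e$, set $x^{(\omega)}_e:=(x^{(\omega_j)}_j)_{j\in e}\in V_e$ and $x^{(a)}_e:=(x^{(a)}_j)_{j\in e}$ for $a\in\{0,1\}$. The Gowers cube norm of $f:V_e\to\mathbb{R}$ is $\|f\|_{\Box^e}:=\mathbb{E}\big(\prod_{\omega\in\{0,1\}^e}f(x^{(\omega)}_e)\mid x^{(0)}_e,x^{(1)}_e\in V_e\big)^{1/2^{|e|}}$. A system of measures is a family of functions $\nu_e:V_e\to[0,\infty)$, $e\in H$, with $\mathbb{E}(\nu_e(x_e)\mid x_e\in V_e)=1+o_{N\to\infty}(1)$. For $e\in H$ and $f:V_e\to\mathbb{R}$, $\mathcal{D}_ef(x^{(0)}_e):=\mathbb{E}\big(\prod_{\omega\in\{0,1\}^e,\ \omega\neq 0^e}f(x^{(\omega)}_e)\mid x^{(1)}_e\in V_e\big)$. The system is pseudorandom if: (i) $\mathcal{D}_e(\nu_e+1)(x_e)=O(1)$ for all $e\in H$, $x_e\in V_e$; (ii) for every choice of exponents $n_{e,\omega}\in\{0,1\}$, $\mathbb{E}\big(\prod_{e\in H}\prod_{\omega\in\{0,1\}^e}\nu_e(x^{(\omega)}_e)^{n_{e,\omega}}\mid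 x^{(0)}_J,x^{(1)}_J\in V_J\big)=1+o_{N\to\infty}(1)$; (iii) for every $e\in H$, $j\in e$, every choice of $n_{e,\omega}\in\{0,1\}$ and every integer $K\ge0$, $\mathbb{E}\Big(\mathbb{E}\big(\prod_{\omega\in\{0,1\}^e}\nu_e(x^{(\omega)}_e)^{n_{e,\omega}}\mid x^{(0)}_j,x^{(1)}_j\in V_j\big)^K\ \Big|\ x^{(0)}_{e\setminus\{j\}},x^{(1)}_{e\setminus\{j\}}\in V_{e\setminus\{j\}}\Big)=O_K(1)$. *)

(* Defs.v *)
From HB Require Import structures.
From mathcomp Require Import all_boot all_order all_algebra.
From mathcomp Require Import reals.
Set Implicit Arguments. Unset Strict Implicit. Unset Printing Implicit Defensive.
Import Order.TTheory GRing.Theory Num.Theory.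
Local Open Scope ring_scope.

(* Coordinates: V_j = 'I_(sz j) (sz j > 0 assumed where needed).           *)
Definition sub (J : finType) (e : {set J}) := {j : J | j \in e}.

Definition VJ (J : finType) (sz : J -> nat) := {dffun forall j : J, 'I_(sz j)}.
Definition Ve (J : finType) (sz : J -> nat) (e : {set J}) :=
  {dffun forall k : sub e, 'I_(sz (val k))}.

Definition proj (J : finType) (sz : J -> nat) (e : {set J}) (x : VJ sz) : Ve sz e :=
  finfun (fun k : sub e => x (val k)).

Definition cube (J : finType) (e : {set J}) := {ffun sub e -> bool}.

Definition mixe (J : finType) (sz : J -> nat) (e : {set J}) (y0 y1 : Ve sz e)
  (w : cube e) : Ve sz e :=
  finfun (fun k : sub e => if w k then y1 k else y0 k).

Definition upd (J : finType) (sz : J -> nat) (e : {set J}) (j : J) (y z : Ve sz e)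
  : Ve sz e :=
  finfun (fun k : sub e => if val k == j then z k else y k).

Definition avg (R : realType) (T : finType) (F : T -> R) : R :=
  (#|T|%:R)^-1 * \sum_(t : T) F t.

(* Gowers box norm; the 2^{|e|}-th root is taken as |e| iterated square roots *)
Definition gowers (R : realType) (J : finType) (sz : J -> nat) (e : {set J})
  (f : Ve sz e -> R) : R :=
  iter #|e| Num.sqrt
    (avg (fun p : Ve sz e * Ve sz e => \prod_(w : cube e) f (mixe p.1 p.2 w))).

Definition Dcal (R : realType) (J : finType) (sz : J -> nat) (e : {set J})
  (f : Ve sz e -> R) (y0 : Ve sz e) : R :=
  avg (fun y1 : Ve sz e =>
         \prod_(w : cube e | w != [ffun => false]) f (mixe y0 y1 w)).

Definition tends_to_one (R : realType) (a : nat -> R) : Prop :=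
  forall eps : R, 0 < eps -> exists N0 : nat, forall n, (N0 <= n)%N -> `|a n - 1| <= eps.

(* system of measures on the sequence of hypergraph systems (indexed by n) *)
Definition system_of_measures (R : realType) (J : finType) (H : {set {set J}})
  (sz : nat -> J -> nat) (nu : forall n (e : {set J}), Ve (sz n) e -> R) : Prop :=
  (forall n e y, e \in H -> 0 <= nu n e y) /\
  (forall e, e \in H -> tends_to_one (fun n => avg (nu n e))).

Definition pseudorandom (R : realType) (J : finType) (H : {set {set J}})
  (sz : nat -> J -> nat) (nu : forall n (e : {set J}), Ve (sz n) e -> R) : Prop :=
  system_of_measures H nu /\
  (exists C : R, forall n e (y : Ve (sz n) e), e \in H ->
      `|Dcal (fun z => nu n e z + 1) y| <= C) /\
  (forall nexp : forall e : {set J}, cube e -> bool,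
      tends_to_one (fun n =>
        avg (fun p : VJ (sz n) * VJ (sz n) =>
          \prod_(e in H) \prod_(w : cube e)
             nu n e (mixe (proj e p.1) (proj e p.2) w) ^+ nexp e w))) /\
  (forall (e : {set J}) (j : J) (nexp : cube e -> bool) (K : nat),
      e \in H -> j \in e ->
      exists C : R, forall n,
        `|avg (fun p : Ve (sz n) e * Ve (sz n) e =>
            (avg (fun q : Ve (sz n) e * Ve (sz n) e =>
               \prod_(w : cube e)
                 nu n e (mixe (upd j p.1 q.1) (upd j p.2 q.2) w) ^+ nexp w)) ^+ K)|
        <= C).

Definition sigma_algebra (T : finType) (S : {set {set T}}) : Prop :=
  set0 \in S /\ (forall A, A \in S -> ~: A \in S) /\
  (forall A B, A \in S -> B \in S -> A :|: B \in S).

Definition generated (T : finType) (G : {set {set T}}) (E : {set T}) : Prop :=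
  forall S, sigma_algebra S -> G \subset S -> E \in S.

Definition in_A (J : finType) (sz : J -> nat) (e : {set J}) (E : {set VJ sz}) : Prop :=
  exists F : {set Ve sz e}, E = [set x | proj e x \in F].

(* Main.v *)
Require Import Defs.
From HB Require Import structures.
From mathcomp Require Import all_boot all_order all_algebra.
From mathcomp Require Import reals.
From mathcomp Require Import ring lra.
Import Order.TTheory GRing.Theory Num.Theory.
Local Open Scope ring_scope.

Section Avg.
Context {R : realType}.

Lemma avgD (T : finType) (F G : T -> R) :
  avg (fun t => F t + G t) = avg F + avg G.
Proof. by rewrite /avg big_split mulrDr. Qed.

Lemma avgZ (T : finType) (c : R) (F : T -> R) :
  avg (fun t => c * F t) = c * avg F.
Proof. by rewrite /avg -mulr_sumr mulrCA. Qed.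

Lemma avg_const (T : finType) (c : R) : (0 < #|T|)%N -> avg (fun _ : T => c) = c.
Proof.
move=> h; rewrite /avg sumr_const.
rewrite cardT -cardE.
rewrite -[c *+ _]mulr_natl mulrA mulVf ?mul1r //.
by rewrite pnatr_eq0 -lt0n.
Qed.

Lemma avg_ler (T : finType) (F G : T -> R) :
  (forall t, F t <= G t) -> avg F <= avg G.
Proof.
move=> h; rewrite /avg ler_wpM2l ?invr_ge0 ?ler0n //.
by apply: ler_sum => t _.
Qed.

Lemma avg_ge0 (T : finType) (F : T -> R) : (forall t, 0 <= F t) -> 0 <= avg F.
Proof. move=> h; rewrite /avg mulr_ge0 ?invr_ge0 ?ler0n //; exact: sumr_ge0. Qed.

Lemma avg_abs (T : finType) (F : T -> R) : `|avg F| <= avg (fun t => `|F t|).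
Proof.
rewrite /avg normrM ger0_norm ?invr_ge0 ?ler0n // ler_wpM2l ?invr_ge0 ?ler0n //.
exact: ler_norm_sum.
Qed.

Lemma avg_eq (T : finType) (F G : T -> R) : (forall t, F t = G t) -> avg F = avg G.
Proof. by move=> h; rewrite /avg; congr (_ * _); apply: eq_bigr. Qed.

Lemma avg_pair (A B : finType) (K : A -> B -> R) :
  avg (fun p : A * B => K p.1 p.2) = avg (fun a => avg (fun b => K a b)).
Proof.
rewrite /avg card_prod natrM invfM -mulrA; congr (_ * _).
rewrite -pair_bigA /= mulr_sumr; by apply: eq_bigr => a _.
Qed.



Lemma avg_swap (A B : finType) (K : A -> B -> R) :
  avg (fun a => avg (fun b => K a b)) = avg (fun b => avg (fun a => K a b)).
Proof.
rewrite /avg -!mulr_sumr exchange_big /=.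
by rewrite mulrCA.
Qed.

Lemma avg_reindex (T : finType) (h : T -> T) (F : T -> R) :
  injective h -> avg (fun t => F (h t)) = avg F.
Proof. by move=> ih; rewrite /avg [in RHS](reindex_inj ih). Qed.

Lemma avg_fst (A B : finType) (F : A -> R) : (0 < #|B|)%N ->
  avg (fun p : A * B => F p.1) = avg F.
Proof.
move=> hB; rewrite (@avg_pair A B (fun a _ => F a)).
by apply: avg_eq => a; rewrite avg_const.
Qed.

Lemma avg_sum (T I : finType) (F : I -> T -> R) :
  avg (fun t => \sum_i F i t) = \sum_i avg (F i).
Proof. by rewrite /avg exchange_big /= mulr_sumr. Qed.

Lemma jensen2 (T : finType) (F : T -> R) : (0 < #|T|)%N ->
  avg F ^+ 2 <= avg (fun t => F t ^+ 2).
Proof.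
move=> hT; set m := avg F.
have h0 : 0 <= avg (fun t => (F t - m) ^+ 2) by apply: avg_ge0 => t; exact: sqr_ge0.
have E : avg (fun t => (F t - m) ^+ 2) =
   avg (fun t => F t ^+ 2) + (- (2 * m)) * m + m ^+ 2.
  rewrite -(@avg_const T (m ^+ 2) hT) -/m -avgZ -!avgD.
  by apply: avg_eq => t; rewrite /=; ring.
rewrite E in h0.
by rewrite -subr_ge0; move: h0; congr (0 <= _); ring.
Qed.

Lemma jensen_pow (T : finType) (F : T -> R) (k : nat) : (0 < #|T|)%N ->
  avg F ^+ (2 ^ k) <= avg (fun t => F t ^+ (2 ^ k)).
Proof.
move=> hT; elim: k F => [|k IH] F; first by rewrite !expn0 !expr1 le_refl.
have -> : avg (fun t => F t ^+ (2 ^ k.+1)) = avg (fun t => (F t ^+ 2) ^+ (2 ^ k)).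
  by apply: avg_eq => t; rewrite expnS exprM.
rewrite expnS exprM.
apply: le_trans (IH (fun t => F t ^+ 2)).
apply: lerXn2r; rewrite ?nnegrE ?sqr_ge0 //.
  by apply: avg_ge0 => t; exact: sqr_ge0.
exact: jensen2.
Qed.

Lemma cs_bounded (T : finType) (g F : T -> R) : (0 < #|T|)%N ->
  (forall t, `|g t| <= 1) -> avg (fun t => g t * F t) ^+ 2 <= avg (fun t => F t ^+ 2).
Proof.
move=> hT hg.
rewrite -real_normK ?num_real //.
apply: (@le_trans _ _ (avg (fun t => `|F t|) ^+ 2)).
  apply: lerXn2r; rewrite ?nnegrE ?normr_ge0 //.
    by apply: avg_ge0 => t; exact: normr_ge0.
  apply: le_trans (avg_abs _ _) _; apply: avg_ler => t.
  by rewrite normrM ler_piMl.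
apply: le_trans (@jensen2 T (fun t => `|F t|) hT) _.
by apply: avg_ler => t; rewrite real_normK ?num_real.
Qed.

End Avg.

Section CS.
Context {R : realType} {J : finType} {sz : J -> nat} {e : {set J}}.
Hypothesis hV : (0 < #|Ve sz e|)%N.
Local Notation V := (Ve sz e).

Definition updk (k : sub e) (y z : V) : V :=
  finfun (fun k' : sub e => if k' == k then z k' else y k').

Lemma updkE k y z k' : updk k y z k' = if k' == k then z k' else y k'.
Proof. by rewrite /updk ffunE. Qed.

Definition invar (k : sub e) (g : V -> R) :=
  forall y y' : V, (forall k', k' != k -> y k' = y' k') -> g y = g y'.

Definition swk (k : sub e) (p : V * V) : V * V := (updk k p.1 p.2, updk k p.2 p.1).

Lemma swkK k : cancel (swk k) (swk k).
Proof.
move=> [y z]; rewrite /swk /=; congr (_, _); apply/ffunP => k';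
by rewrite !updkE; case: eqP.
Qed.

Lemma avg_upd k (F : V -> R) : avg F = avg (fun p : V * V => F (updk k p.1 p.2)).
Proof.
have -> : avg (fun p : V * V => F (updk k p.1 p.2)) =
          avg (fun p : V * V => (fun q : V * V => F q.1) (swk k p)) by [].
rewrite (@avg_reindex _ _ (swk k) (fun q : V * V => F q.1) (can_inj (swkK k))).
by rewrite avg_fst.
Qed.

Lemma updk_invar k (y z : V) k' : k' != k -> y k' = updk k y z k'.
Proof. by move=> h; rewrite updkE (negbTE h). Qed.

Lemma updkK k (y z z' : V) : updk k (updk k y z) z' = updk k y z'.
Proof. by apply/ffunP => k'; rewrite !updkE; case: eqP. Qed.

Lemma cs_step k (h g : V -> R) : (forall y, `|g y| <= 1) -> invar k g ->
  avg (fun y => h y * g y) ^+ 2 <=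
  avg (fun p : V * V => h p.1 * h (updk k p.1 p.2)).
Proof.
move=> hg ig.
pose Phi y := avg (fun z => h (updk k y z)).
have E1 : avg (fun y => h y * g y) = avg (fun y => g y * Phi y).
  rewrite (avg_upd k) /=.
  rewrite (@avg_pair R V V (fun y z => h (updk k y z) * g (updk k y z))).
  apply: avg_eq => y; rewrite /Phi -avgZ; apply: avg_eq => z.
  rewrite mulrC; congr (_ * _); symmetry; apply: ig => k' hk'.
  exact: updk_invar.
have E2 : avg (fun y => Phi y ^+ 2) =
          avg (fun p : V * V => h p.1 * h (updk k p.1 p.2)).
  have iP : forall y z, Phi (updk k y z) = Phi y.
    by move=> y z; rewrite /Phi; apply: avg_eq => z'; rewrite updkK.
  transitivity (avg (fun y => h y * Phi y)).
    rewrite [in RHS](avg_upd k) /=.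
    rewrite (@avg_pair R V V (fun y z => h (updk k y z) * Phi (updk k y z))).
    apply: avg_eq => y.
    under avg_eq do rewrite iP mulrC.
    by rewrite avgZ expr2.
  rewrite (@avg_pair R V V (fun y z => h y * h (updk k y z))).
  by apply: avg_eq => y; rewrite avgZ.
rewrite E1 -E2; exact: cs_bounded.
Qed.

End CS.

Section Box.
Context {R : realType} {J : finType} {sz : J -> nat} {e : {set J}}.
Hypothesis hV : (0 < #|Ve sz e|)%N.
Local Notation V := (Ve sz e).

Definition subS (S : {set sub e}) (w : cube e) : bool := [forall k, w k ==> (k \in S)].

Definition box (S : {set sub e}) (f : V -> R) : R :=
  avg (fun p : V * V => \prod_(w : cube e | subS S w) f (mixe p.1 p.2 w)).

Definition setj (j : sub e) (w : cube e) : cube e := [ffun k => (k == j) || w k].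
Definition tgj (j : sub e) (w : cube e) : cube e := [ffun k => if k == j then ~~ w k else w k].

Lemma tgjK j : involutive (tgj j).
Proof. by move=> w; apply/ffunP => k; rewrite !ffunE; case: eqP => // _; rewrite negbK. Qed.

Lemma subS_noj (S : {set sub e}) j w : j \notin S -> subS S w -> w j = false.
Proof.
move=> hj /forallP /(_ j); case: (w j) => //= hj'; by rewrite hj' in hj.
Qed.

Lemma L1 (S : {set sub e}) j w : j \notin S ->
  subS (j |: S) w && ~~ w j = subS S w.
Proof.
move=> hj; apply/idP/idP.
  case/andP => /forallP h nwj; apply/forallP => k; apply/implyP => wk.
  move: (h k); rewrite wk /= in_setU1; case/orP => // /eqP ekj.
  by move: wk; rewrite ekj (negbTE nwj).
move=> h; rewrite (@subS_noj S j w hj h) andbT; apply/forallP => k; apply/implyP => wk.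
by move/forallP: h => /(_ k); rewrite wk /= => hk; rewrite in_setU1 hk orbT.
Qed.

Lemma L2 (S : {set sub e}) j w : j \notin S ->
  subS (j |: S) (tgj j w) && tgj j w j = subS S w.
Proof.
move=> hj; apply/idP/idP.
  case/andP => /forallP h; rewrite ffunE eqxx => nwj; apply/forallP => k.
  apply/implyP => wk; move: (h k); rewrite ffunE; case: eqP => [ekj|nkj].
    by move: wk; rewrite ekj (negbTE nwj).
  by rewrite wk /= in_setU1; case/orP => // /eqP.
move=> h; rewrite ffunE eqxx (@subS_noj S j w hj h) andbT; apply/forallP => k.
apply/implyP; rewrite ffunE in_setU1; case: eqP => //= _ wk.
by move/forallP: h => /(_ k); rewrite wk.
Qed.

Lemma mixe_setj (y0 y1 : V) j w :
  mixe y0 y1 (setj j w) = updk j (mixe y0 y1 w) y1.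
Proof.
apply/ffunP => k; rewrite updkE !ffunE; case: eqP => [->|] //=.
Qed.

Lemma prod_split (S : {set sub e}) j (F : cube e -> R) : j \notin S ->
  (forall w, subS S w -> F (tgj j w) = F (setj j w)) ->
  \prod_(w | subS (j |: S) w) F w = \prod_(w | subS S w) (F w * F (setj j w)).
Proof.
move=> hj hF.
rewrite (bigID (fun w : cube e => w j) (subS (j |: S))) /= mulrC big_split /=.
congr (_ * _); first by apply: eq_bigl => w; rewrite L1.
rewrite (reindex_inj (inv_inj (tgjK j))) /=.
apply: eq_big => w; [by rewrite L2 | move=> hw].
by apply: hF; rewrite -(@L2 S j w hj).
Qed.


Definition Pi (S : {set sub e}) j (f : V -> R) (y0 y1 z : V) : R :=
  \prod_(w | subS S w) (f (mixe y0 y1 w) * f (updk j (mixe y0 y1 w) z)).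

Lemma Pi_sw (S : {set sub e}) j f y0 y1 z : j \notin S ->
  Pi S j f y0 (updk j y1 z) (updk j z y1) = Pi S j f y0 y1 y1.
Proof.
move=> hj; apply: eq_bigr => w hw.
have wj := @subS_noj S j w hj hw.
have -> : mixe y0 (updk j y1 z) w = mixe y0 y1 w.
  apply/ffunP => k; rewrite !ffunE.
  by case: eqP => // ->; rewrite wj.
congr (_ * _); congr (f _); apply/ffunP => k; rewrite !updkE; case: eqP => // ->.
Qed.

Lemma box_step (S : {set sub e}) j f : j \notin S ->
  avg (fun z : V => box S (fun y => f y * f (updk j y z))) = box (j |: S) f.
Proof.
move=> hj.
transitivity (avg (fun y0 : V => avg (fun y1 : V => Pi S j f y0 y1 y1))); last first.
  rewrite /box (@avg_pair R V V (fun y0 y1 => \prod_(w | subS (j |: S) w) f (mixe y0 y1 w))).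
  apply: avg_eq => y0; apply: avg_eq => y1.
  rewrite prod_split //; last first.
    move=> w hw; congr (f (mixe _ _ _)); apply/ffunP => k; rewrite !ffunE.
    by case: eqP => // ->; rewrite (@subS_noj S j w hj hw).
  by apply: eq_bigr => w _; rewrite mixe_setj.
transitivity (avg (fun z : V => avg (fun y0 : V => avg (fun y1 : V => Pi S j f y0 y1 z)))).
  apply: avg_eq => z.
  by rewrite /box (@avg_pair R V V (fun y0 y1 => Pi S j f y0 y1 z)).
rewrite avg_swap; apply: avg_eq => y0.
rewrite avg_swap -(@avg_pair R V V (fun y1 z => Pi S j f y0 y1 z)).
rewrite -(@avg_reindex R _ (swk j) _ (can_inj (swkK j))) /swk /=.
under avg_eq do rewrite Pi_sw //.
by rewrite (@avg_fst R V V (fun y1 => Pi S j f y0 y1 y1)).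
Qed.

Lemma gcs (n : nat) : forall (S : {set sub e}) (f : V -> R) (g : sub e -> V -> R),
  #|S| = n -> (forall k y, `|g k y| <= 1) -> (forall k, invar k (g k)) ->
  avg (fun y => f y * \prod_(k in S) g k y) ^+ (2 ^ n) <= box S f.
Proof.
elim: n => [|n IH] S f g hS hg ig.
  have -> : S = set0 by apply/eqP; rewrite -cards_eq0 hS.
  rewrite expn0 expr1 /box.
  have hw0 : forall y0 y1 : V, \prod_(w | subS set0 w) f (mixe y0 y1 w) = f y0.
    move=> y0 y1; rewrite (big_pred1 [ffun => false]).
      by congr f; apply/ffunP => k; rewrite !ffunE.
    move=> w /=; apply/forallP/eqP => [h|->].
      apply/ffunP => k; rewrite ffunE; move: (h k); rewrite inE; by case: (w k).
    by move=> k; rewrite ffunE.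
  under [X in _ <= X]avg_eq do rewrite hw0.
  rewrite (@avg_fst R V V f hV).
  under avg_eq do rewrite big_set0 mulr1.
  exact: le_refl.
have : (0 < #|S|)%N by rewrite hS.
rewrite card_gt0 => /set0Pn [j hjS].
pose S' := S :\ j.
have hS' : #|S'| = n.
  by move: hS; rewrite (cardsD1 j S) hjS add1n => -[].
have hjS' : j \notin S' by rewrite /S' setD11.
have eS : S = j |: S' by rewrite /S' setD1K.
pose h y := f y * \prod_(k in S') g k y.
have E0 : avg (fun y => f y * \prod_(k in S) g k y) = avg (fun y => h y * g j y).
  by apply: avg_eq => y; rewrite (big_setD1 j hjS) /= /h [g j y * _]mulrC mulrA.
rewrite E0.
pose Q := avg (fun p : V * V => h p.1 * h (updk j p.1 p.2)).
have hBQ : avg (fun y => h y * g j y) ^+ 2 <= Q := cs_step hV j h (g j) (hg j) (ig j).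
pose G z k y := g k y * g k (updk j y z).
pose X z := avg (fun y => (f y * f (updk j y z)) * \prod_(k in S') G z k y).
have hQ : Q = avg X.
  rewrite /Q (@avg_pair R V V (fun y z => h y * h (updk j y z))) avg_swap.
  apply: avg_eq => z; apply: avg_eq => y.
  by rewrite /h /G big_split /=; ring.
have hX : forall z, X z ^+ (2 ^ n) <= box S' (fun y => f y * f (updk j y z)).
  move=> z; apply: IH => //.
    move=> k y; rewrite /G normrM; exact: mulr_ile1.
  move=> k y y' hyy; rewrite /G (ig k y y' hyy); congr (_ * _); apply: ig => k' hk'.
  by rewrite !updkE; case: eqP => // _; exact: hyy.
rewrite expnS exprM.
apply: (@le_trans _ _ (Q ^+ (2 ^ n))).
  apply: lerXn2r; rewrite ?nnegrE ?sqr_ge0 //.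
  exact: le_trans (sqr_ge0 _) hBQ.
rewrite hQ; apply: le_trans (@jensen_pow R V X n hV) _.
rewrite eS -(@box_step S' j f hjS'); apply: avg_ler => z; exact: hX z.
Qed.

End Box.

Lemma iter_sqrt {R : realType} (k : nat) (x b : R) : 0 <= x ->
  x ^+ (2 ^ k) <= b -> x <= iter k Num.sqrt b.
Proof.
elim: k x b => [|k IH] x b hx; first by rewrite expn0 expr1.
rewrite expnS exprM => h.
have h2 := IH _ _ (sqr_ge0 x) h.
rewrite /= -(ger0_norm hx) -sqrtr_sqr ler_sqrt //.
exact: le_trans (sqr_ge0 x) h2.
Qed.

Section G.
Context {R : realType} {J : finType} {sz : J -> nat} {e : {set J}}.
Hypothesis hV : (0 < #|Ve sz e|)%N.
Local Notation V := (Ve sz e).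

Lemma gcs_gowers (f : V -> R) (g : sub e -> V -> R) : (0 < #|e|)%N ->
  (forall k y, `|g k y| <= 1) -> (forall k, invar k (g k)) ->
  `|avg (fun y => f y * \prod_k g k y)| <= gowers f.
Proof.
move=> he hg ig.
have hc : #|[set: sub e]| = #|e| by rewrite cardsT card_sig; apply: eq_card.
have := @gcs R J sz e hV #|e| setT f g hc hg ig.
have -> : box setT f =
  avg (fun p : V * V => \prod_(w : cube e) f (mixe p.1 p.2 w)).
  apply: avg_eq => p; apply: eq_bigl => w.
  by apply/forallP => k; rewrite in_setT implybT.
have -> : avg (fun y => f y * \prod_(k in [set: sub e]) g k y) =
          avg (fun y => f y * \prod_k g k y).
  by apply: avg_eq => y; congr (_ * _); apply: eq_bigl => k; rewrite in_setT.
move=> h; apply: iter_sqrt; first exact: normr_ge0.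
move: h; case: #|e| he => // m _.
by rewrite expnS !exprM real_normK ?num_real.
Qed.

End G.

Section Fiber.
Context {R : realType} {J : finType} {sz : J -> nat} {e : {set J}}.
Hypothesis hsz : forall j, (0 < sz j)%N.

Lemma projE (x : VJ sz) (k : sub e) : proj e x k = x (val k).
Proof. exact: ffunE. Qed.

Definition ext (x : VJ sz) (y : Ve sz e) : VJ sz :=
  finfun (fun j : J => insubd (x j)
    (match (insub j : option (sub e)) with Some k => val (y k) | None => val (x j) end)).

Lemma ext_val x y (k : sub e) : ext x y (val k) = y k.
Proof.
apply: val_inj; rewrite /ext ffunE valK insubdK //.
exact: ltn_ord.
Qed.

Lemma ext_out x y j : j \notin e -> ext x y j = x j.
Proof.
move=> hj; apply: val_inj; rewrite /ext ffunE insubN // insubdK //.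
exact: ltn_ord.
Qed.

Lemma ext_in x x' j : j \in e -> ext x (proj e x') j = x' j.
Proof.
move=> hj; apply: val_inj; rewrite /ext ffunE.
case: insubP => [k _ hk|]; last by rewrite hj.
rewrite insubdK projE.
  by case: k hk => k' hk' /= ->.
by case: k hk => k' hk' /= hh; subst k'; exact: ltn_ord.
Qed.

Definition x0 : VJ sz := finfun (fun j => Ordinal (hsz j)).

Lemma fiber_card (y y' : Ve sz e) :
  (#|[set x : VJ sz | proj e x == y]| <= #|[set x : VJ sz | proj e x == y']|)%N.
Proof.
rewrite -(@card_in_imset _ _ (fun x => ext x y')).
  apply: subset_leq_card; apply/subsetP => z /imsetP [x _ ->].
  rewrite inE; apply/eqP/ffunP => k; rewrite /proj ffunE; exact: ext_val.
move=> x1 x2; rewrite !inE => /eqP h1 /eqP h2 h; apply/ffunP => j.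
case: (boolP (j \in e)) => hj.
  have := congr1 (fun F : Ve sz e => F (exist _ j hj)) (etrans h1 (esym h2)).
  by rewrite /= !projE.
by rewrite -(ext_out x1 y' j hj) h ext_out.
Qed.

Lemma avg_proj (Phi : Ve sz e -> R) :
  avg (fun x : VJ sz => Phi (proj e x)) = avg Phi.
Proof.
pose c := #|[set x : VJ sz | proj e x == proj e x0]|.
have hc : forall y, #|[set x : VJ sz | proj e x == y]| = c.
  by move=> y; apply/eqP; rewrite eqn_leq !fiber_card.
have hs : forall F : Ve sz e -> R,
    \sum_(x : VJ sz) F (proj e x) = c%:R * \sum_(y : Ve sz e) F y.
  move=> F; rewrite (partition_big (proj e) predT) //= mulr_sumr.
  apply: eq_bigr => y _.
  rewrite (eq_bigr (fun _ => F y)); last by move=> x /eqP ->.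
  rewrite sumr_const -(hc y) mulr_natl; congr (_ *+ _).
  by apply: eq_card => x; rewrite inE.
have hcard : #|VJ sz| = (c * #|Ve sz e|)%N.
  apply/eqP; rewrite -(eqr_nat R) natrM.
  have := hs (fun _ => 1); rewrite !sumr_const !cardT -!cardE => ->.
  by rewrite !cardT.
have cpos : (0 < c)%N.
  have : (0 < #|VJ sz|)%N by apply/card_gt0P; exists x0.
  by rewrite hcard muln_gt0 => /andP [].
rewrite /avg hs hcard natrM invfM.
have c0 : c%:R != 0 :> R by rewrite pnatr_eq0 -lt0n.
by rewrite [c%:R^-1 * _]mulrC -mulrA mulKf.
Qed.

End Fiber.

Section Main.
Context {R : realType} {J : finType} {sz : J -> nat}.
Hypothesis hsz : forall j, (0 < sz j)%N.
Variables (e : {set J}) (G : {set {set VJ sz}}).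
Hypothesis hGA : forall A, A \in G -> exists2 e' : {set J}, e' \proper e & in_A e' A.

Local Notation xb := (x0 hsz).

Lemma projrel x A : A \in G -> (x \in A) = (ext xb (proj e x) \in A).
Proof.
move=> /hGA [e' /properP [se _] [F ->]]; rewrite !inE; congr (_ \in F).
apply/ffunP => k; rewrite !projE ext_in //.
by apply: (subsetP se); exact: valP.
Qed.

Definition invb (k : sub e) (A : {set VJ sz}) : bool :=
  [forall y : Ve sz e, forall y' : Ve sz e,
    [forall k', (k' != k) ==> (y k' == y' k')] ==>
    ((ext xb y \in A) == (ext xb y' \in A))].

Lemma invex A : A \in G -> exists k, invb k A.
Proof.
move=> /hGA [e' /properP [se [j hje hje']] [F ->]].
exists (exist _ j hje); apply/forallP => y; apply/forallP => y'.
apply/implyP => /forallP hyy; rewrite !inE; apply/eqP; congr (_ \in F).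
apply/ffunP => k; rewrite !projE.
have hk : val k \in e by apply: (subsetP se); exact: valP.
have := ext_val xb y (exist _ (val k) hk).
have := ext_val xb y' (exist _ (val k) hk).
rewrite /= => -> ->.
have := hyy (exist _ (val k) hk); move/implyP => H; apply/eqP; apply: H.
apply/eqP => /(congr1 val) /= ekj.
by move: (valP k); rewrite /= ekj (negbTE hje').
Qed.

Lemma pk_inv (k0 : sub e) A : A \in G ->
  invb (odflt k0 [pick k | invb k A]) A.
Proof.
move=> hA; case: pickP => [k hk //|hn].
by case: (invex A hA) => k; rewrite hn.
Qed.

Lemma atom_bound (k0 : sub e) (sg : {set {set VJ sz}}) (f : Ve sz e -> R) :
  `|avg (fun x : VJ sz =>
      \prod_(A in G) ((x \in A) == (A \in sg))%:R * f (proj e x))| <= gowers f.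
Proof.
pose pk A := odflt k0 [pick k | invb k A].
pose g (k : sub e) (y : Ve sz e) : R := \prod_(A in G | pk A == k) ((ext xb y \in A) == (A \in sg))%:R.
have E1 : forall x : VJ sz,
    \prod_(A in G) ((x \in A) == (A \in sg))%:R * f (proj e x) =
    f (proj e x) * \prod_k g k (proj e x).
  move=> x; rewrite mulrC; congr (_ * _).
  rewrite (partition_big pk predT) //=; apply: eq_bigr => k _.
  by apply: eq_bigr => A /andP [hA _]; rewrite (projrel x A hA).
rewrite (@avg_eq R _ _ _ E1) (avg_proj hsz (fun y => f y * \prod_k g k y)).
apply: gcs_gowers.
- by apply/card_gt0P; exists (proj e xb).
- by rewrite card_gt0; apply/set0Pn; exists (val k0); exact: valP.
- move=> k y; rewrite normr_prod; apply: prodr_ile1 => A _.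
  by rewrite normr_ge0 /=; case: (_ == _); rewrite ?normr1 ?normr0.
- move=> k y y' hyy; apply: eq_bigr => A /andP [hA /eqP hpk].
  congr (_%:R); congr (_ == _); apply/eqP.
  have := pk_inv k0 A hA; rewrite -/(pk A) hpk.
  move=> /forallP /(_ y) /forallP /(_ y') /implyP; apply.
  by apply/forallP => k'; apply/implyP => hk'; apply/eqP; exact: hyy.
Qed.

Definition cc (E : {set VJ sz}) (sg : {set {set VJ sz}}) : R :=
  ([exists x', (x' \in E) && [forall A in G, (x' \in A) == (A \in sg)]])%:R.

Lemma decomp (E : {set VJ sz})
  (hsat : forall x x', (forall A, A \in G -> (x \in A) = (x' \in A)) ->
     (x \in E) = (x' \in E)) x :
  (x \in E)%:R = \sum_(sg in powerset G) cc E sg *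
                   \prod_(A in G) ((x \in A) == (A \in sg))%:R :> R.
Proof.
pose sx := [set A in G | x \in A].
have hsx : sx \in powerset G by rewrite powersetE; apply/subsetP => A; rewrite inE => /andP [].
have hprod : forall sg, sg \in powerset G ->
    \prod_(A in G) ((x \in A) == (A \in sg))%:R = (sg == sx)%:R :> R.
  move=> sg; rewrite powersetE => sG; case: eqP => [->|ne].
    by apply: big1 => A hA; rewrite inE hA /= eqxx.
  case: (boolP [exists A, (A \in sg) != (A \in sx)]) => [/existsP [A hA]|hn]; last first.
    exfalso; apply: ne; apply/setP => A; apply/eqP.
    by move/existsPn: hn => /(_ A); rewrite negbK.
  have AG : A \in G.
    case: (boolP (A \in G)) => // nAG.
    by move: hA; rewrite inE (negbTE nAG) /=; case: (boolP (A \in sg)) => // /(subsetP sG); rewrite (negbTE nAG).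
  rewrite (bigD1 A AG) /=.
  move: hA; rewrite inE AG /= => hA.
  have -> : (x \in A) == (A \in sg) = false.
    by apply/negbTE; rewrite eq_sym.
  by rewrite mul0r.
rewrite (eq_bigr (fun sg => cc E sg * (sg == sx)%:R)); last first.
  by move=> sg hsg; rewrite hprod.
rewrite (bigD1 sx hsx) /= eqxx mulr1 big1 ?addr0; last first.
  by move=> sg /andP [_ /negbTE ->]; rewrite mulr0.
rewrite /cc; congr ((nat_of_bool _)%:R); apply/idP/existsP.
  by move=> hx; exists x; rewrite hx /=; apply/forallP => A; apply/implyP => hA; rewrite inE hA.
move=> [x' /andP [hx' /forallP h]]; rewrite (hsat x x') // => A hA.
by move: (h A); rewrite hA /= inE hA /= => /eqP.
Qed.

Lemma main_fixed (N : nat) (hN : (#|G| <= N)%N) (k0 : sub e) (E : {set VJ sz})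
  (hsat : forall x x', (forall A, A \in G -> (x \in A) = (x' \in A)) ->
     (x \in E) = (x' \in E)) (f : Ve sz e -> R) :
  `|avg (fun x : VJ sz => (x \in E)%:R * f (proj e x))| <= (2 ^ N)%:R * gowers f.
Proof.
have he : (0 < #|e|)%N by rewrite card_gt0; apply/set0Pn; exists (val k0); exact: valP.
have g0 : 0 <= gowers f.
  rewrite /gowers; case: #|e| he => // m _; rewrite iterS; exact: sqrtr_ge0.
rewrite (@avg_eq R _ _ (fun x => \sum_(sg in powerset G) cc E sg *
   (\prod_(A in G) ((x \in A) == (A \in sg))%:R * f (proj e x)))); last first.
  by move=> x; rewrite (decomp E hsat) mulr_suml; apply: eq_bigr => sg _; rewrite mulrA.
have -> : avg (fun x => \sum_(sg in powerset G) cc E sg *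
   (\prod_(A in G) ((x \in A) == (A \in sg))%:R * f (proj e x))) =
   \sum_(sg in powerset G) cc E sg * avg (fun x : VJ sz =>
   \prod_(A in G) ((x \in A) == (A \in sg))%:R * f (proj e x)).
  by rewrite /avg exchange_big mulr_sumr; apply: eq_bigr => sg _; rewrite -mulr_sumr mulrCA.
apply: le_trans (ler_norm_sum _ _ _) _.
apply: le_trans (_ : \sum_(sg in powerset G) gowers f <= _).
  apply: ler_sum => sg _; rewrite normrM.
  apply: le_trans (_ : 1 * gowers f <= _); last by rewrite mul1r.
  apply: ler_pM; rewrite ?normr_ge0 ?atom_bound //.
  by rewrite /cc; case: (boolP [exists _, _]); rewrite ?normr1 ?normr0.
rewrite sumr_const card_powerset -[gowers f *+ _]mulr_natl ler_wpM2r // ler_nat.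
by apply: leq_pexp2l.
Qed.

End Main.

Theorem mainTheorem6 (R : realType) (J : finType) (d : nat) (H : {set {set J}})
  (sz : nat -> J -> nat) (nu : forall n (e : {set J}), Ve (sz n) e -> R) :
  (1 <= d)%N ->
  (forall e, e \in H -> #|e| = d) ->
  (forall n j, (0 < sz n j)%N) ->
  pseudorandom H nu ->
  forall M : nat, exists C : R,
    forall n (B : {set J} -> {set {set VJ (sz n)}}),
      (forall e' : {set J}, (#|e'| < d)%N ->
         [/\ sigma_algebra (B e'), (forall E, E \in B e' -> in_A e' E)
           & (#|B e'| <= M)%N]) ->
      forall (e : {set J}) (E : {set VJ (sz n)}) (f : Ve (sz n) e -> R),
        e \in H ->
        generated (\bigcup_(e' : {set J} | e' \proper e) B e') E ->
        `|avg (fun x : VJ (sz n) => (x \in E)%:R * f (proj e x))| <= C * gowers f.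
Proof.
move=> hd hH hsz _ M.
exists ((2 ^ (2 ^ #|J| * M))%:R).
move=> n B hB e E f heH hgen.
pose G := \bigcup_(e' : {set J} | e' \proper e) B e'.
have hed : #|e| = d := hH e heH.
have hBe : forall e' : {set J}, e' \proper e -> [/\ sigma_algebra (B e'),
    (forall E, E \in B e' -> in_A e' E) & (#|B e'| <= M)%N].
  by move=> e' hp; apply: hB; rewrite -hed; exact: proper_card.
have hGA : forall A, A \in G -> exists2 e' : {set J}, e' \proper e & in_A e' A.
  move=> A /bigcupP [e' hp hA]; exists e' => //.
  by have [_ h _] := hBe e' hp; exact: h.
have hsat : forall x x', (forall A, A \in G -> (x \in A) = (x' \in A)) ->
     (x \in E) = (x' \in E).
  pose Sat := [set A : {set VJ (sz n)} | [forall x, forall x',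
     [forall A0 in G, (x \in A0) == (x' \in A0)] ==> ((x \in A) == (x' \in A))]].
  have hS : sigma_algebra Sat.
    split; [|split].
    - by rewrite inE; apply/forallP => x; apply/forallP => x'; apply/implyP => _; rewrite !inE.
    - move=> A; rewrite !inE => /forallP HA; apply/forallP => x; apply/forallP => x'.
      apply/implyP => hx; rewrite !in_setC.
      by move: (HA x) => /forallP /(_ x') /implyP /(_ hx) /eqP ->.
    - move=> A A'; rewrite !inE => /forallP HA /forallP HA'.
      apply/forallP => x; apply/forallP => x'; apply/implyP => hx; rewrite !in_setU.
      move: (HA x) => /forallP /(_ x') /implyP /(_ hx) /eqP ->.
      by move: (HA' x) => /forallP /(_ x') /implyP /(_ hx) /eqP ->.
  have hGS : G \subset Sat.
    apply/subsetP => A hA; rewrite inE; apply/forallP => x; apply/forallP => x'.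
    by apply/implyP => /forallP /(_ A) /implyP /(_ hA).
  have := hgen Sat hS hGS; rewrite inE => /forallP HE x x' hxx.
  apply/eqP; move: (HE x) => /forallP /(_ x') /implyP; apply.
  by apply/forallP => A; apply/implyP => hA; apply/eqP; exact: hxx.
have hcard : (#|G| <= 2 ^ #|J| * M)%N.
  apply: (@leq_trans (\sum_(e' : {set J} | e' \proper e) #|B e'|)).
    rewrite /G; elim/big_rec2: _ => [|e' m X hp h]; first by rewrite cards0.
    apply: leq_trans (leq_card_setU _ _).1 _.
    by rewrite leq_add2l.
  apply: (@leq_trans (\sum_(e' : {set J} | e' \proper e) M)).
    by apply: leq_sum => e' hp; have [_ _ h] := hBe e' hp.
  rewrite sum_nat_const; apply: leq_mul => //.
  apply: leq_trans (max_card _) _.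
  rewrite -(cardsT J) -card_powerset.
  by rewrite -cardsT; apply: subset_leq_card; apply/subsetP => A _; rewrite powersetE subsetT.
have [j hj] : exists j, j \in e.
  by apply/set0Pn; rewrite -card_gt0 hed.
exact: (@main_fixed R J (sz n) (hsz n) e G hGA _ hcard (exist _ j hj) E hsat f).
Qed.
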